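(* In the setting described in the context, for every $\boldsymbol{x}\in\mathbb{Z}_+^2$, $\Gamma\subset\mathcal{D}_{\boldsymbol{x}}$, and hence $\mathcal{D}\subset\mathcal{D}_{\boldsymbol{x}}$.
   Context: Let $S_0=\{1,\dots,s_0\}$ be finite and $\{\boldsymbol{Y}_n\}$ a Markov chain on $\mathbb{S}=\mathbb{Z}^2\times S_0$ with $\mathbb{P}(\boldsymbol{Y}_{n+1}=(x_1+k,x_2+l,j')\mid\boldsymbol{Y}_n=(x_1,x_2,j))=[A_{k,l}]_{j,j'}$ for $k,l\in\{-1,0,1\}$ (no other transitions), $A_{k,l}$ nonnegative $s_0\times s_0$ with $\sum A_{k,l}$ stochastic. Let $\mathbb{S}_+=\mathbb{Z}_+^2\times S_0$, $P_+$ the restriction of the transition matrix to $\mathbb{S}_+$, $\tau=\inf\{n\ge0:\boldsymbol{Y}_n\notin\mathbb{S}_+\}$, $\tilde q_{\boldsymbol{y},\boldsymbol{y}'}=\mathbb{E}\big(\sum_{n=0}^{\tau-1}1(\boldsymbol{Y}_n=\boldsymbol{y}')\mid\boldsymbol{Y}_0=\boldsymbol{y}\big)$. With $\boldsymbol\pi_{*,*}$ the stationary distribution of $\sum A_{k,l}$, $a_1=\boldsymbol{\pi}_{*,*}\sum_l(A_{1,l}-A_{-1,l})\mathbf{1}$, $a_2=\boldsymbol{\pi}_{*,*}\sum_k(A_{k,1}-A_{k,-1})\mathbf{1}$. Standing assumptions: $\{\boldsymbol Y_n\}$ irreducible and aperiodic; $a_1<0$ or $a_2<0$; $P_+$ irreducible.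 $\Phi_{\boldsymbol{x}}(\theta_1,\theta_2)$ is the $s_0\times s_0$ matrix with $(j,j')$ entry $\sum_{k_1,k_2\ge0}e^{k_1\theta_1+k_2\theta_2}\tilde q_{(\boldsymbol{x},j),(k_1,k_2,j')}$; $\mathcal{D}_{\boldsymbol{x}}$ is the interior of $\{(\theta_1,\theta_2):\Phi_{\boldsymbol{x}}(\theta_1,\theta_2)<\infty\text{ elementwise}\}$. $A_{*,*}(\theta_1,\theta_2)=\sum_{k,l}e^{k\theta_1+l\theta_2}A_{k,l}$, $\Gamma=\{(\theta_1,\theta_2)\in\mathbb{R}^2:\mathrm{spr}(A_{*,*}(\theta_1,\theta_2))<1\}$ (spr = spectral radius), and $\mathcal{D}=\{(\theta_1,\theta_2)\in\mathbb{R}^2:\exists(\theta_1',\theta_2')\in\Gamma\text{ with }\theta_1<\theta_1',\ \theta_2<\theta_2'\}$. *)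

(* Defs.v *)
From HB Require Import structures.
From mathcomp Require Import all_boot all_order all_algebra.
From mathcomp Require Import all_classical all_reals all_analysis.
From mathcomp Require Import complex.
Set Implicit Arguments. Unset Strict Implicit. Unset Printing Implicit Defensive.
Import Order.TTheory GRing.Theory Num.Theory.
Import numFieldNormedType.Exports.
Local Open Scope ring_scope.
Local Open Scope classical_set_scope.

Section QBD.
Variable R : realType.
Variable s0 : nat.
(* A k l is the paper's A_{k-1,l-1}, for k l : 'I_3 (i.e. k-1, l-1 in {-1,0,1}) *)
Variable A : 'I_3 -> 'I_3 -> 'M[R]_s0.

Definition shift (k : 'I_3) : int := (k%:Z - 1)%R.

Definition state := ((int * int) * 'I_s0)%type.

Definition in_Splus (y : state) : bool := (0 <= y.1.1) && (0 <= y.1.2).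

Definition move (y : state) (k l : 'I_3) (j : 'I_s0) : state :=
  ((y.1.1 + shift k, y.1.2 + shift l), j).

Definition trans (y z : state) : R :=
  \sum_(k : 'I_3) \sum_(l : 'I_3)
     (if z == move y k l z.2 then A k l y.2 z.2 else 0).

Fixpoint reach_in (S : state -> bool) (n : nat) (y z : state) : Prop :=
  match n with
  | 0 => S y /\ y = z
  | n'.+1 => S y /\ exists w, 0 < trans y w /\ reach_in S n' w z
  end.

Definition irreducible_chain : Prop :=
  forall y z : state, exists n, reach_in (fun _ => true) n y z.

Definition aperiodic_chain : Prop :=
  forall (y : state) (d : nat),
    (forall n, (0 < n)%N -> reach_in (fun _ => true) n y y -> (d %| n)%N) ->
    d = 1%N.

Definition irreducible_Pplus : Prop :=
  forall y z : state, in_Splus y -> in_Splus z ->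
    exists n, reach_in in_Splus n y z.

(* taboo probability: P(Y_n = z, n < tau | Y_0 = y) *)
Fixpoint taboo (n : nat) (y z : state) : R :=
  match n with
  | 0 => if in_Splus y && (y == z) then 1 else 0
  | n'.+1 => if in_Splus y then
      \sum_(k : 'I_3) \sum_(l : 'I_3) \sum_(j : 'I_s0)
         A k l y.2 j * taboo n' (move y k l j) z
      else 0
  end.

Definition qtilde (y z : state) : \bar R :=
  (\sum_(0 <= n <oo) (taboo n y z)%:E)%E.

Definition natstate (x : nat * nat) (j : 'I_s0) : state :=
  ((x.1%:Z, x.2%:Z), j).

Definition Phi (x : nat * nat) (theta : R * R) (j j' : 'I_s0) : \bar R :=
  \esum_(k in [set: nat * nat])
     ((expR (k.1%:R * theta.1 + k.2%:R * theta.2))%:E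
       * qtilde (natstate x j) (natstate k j'))%E.

Definition Dx (x : nat * nat) : set (R * R) :=
  interior ([set theta | forall j j', (Phi x theta j j' < +oo)%E] : set (prod R R)).

Definition Astar (theta : R * R) : 'M[R]_s0 :=
  \sum_(k : 'I_3) \sum_(l : 'I_3)
     expR ((shift k)%:~R * theta.1 + (shift l)%:~R * theta.2) *: A k l.

Definition Asum : 'M[R]_s0 := \sum_(k : 'I_3) \sum_(l : 'I_3) A k l.

Definition cplx_eigenvalues (M : 'M[R]_s0) : set (R[i]) :=
  [set z | root (char_poly (map_mx (fun r : R => (r%:C)%C) M)) z].

Definition spr (M : 'M[R]_s0) : R :=
  sup [set Normc.normc z | z in cplx_eigenvalues M].

Definition Gamma : set (R * R) := [set theta | spr (Astar theta) < 1].

Definition Dset : set (R * R) :=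
  [set theta | exists2 theta', Gamma theta' &
                 theta.1 < theta'.1 /\ theta.2 < theta'.2].

Definition is_stationary (pi : 'rV[R]_s0) (M : 'M[R]_s0) : Prop :=
  (forall j, 0 <= pi 0 j) /\ \sum_j pi 0 j = 1 /\ pi *m M = pi.

Definition drift1 (pi : 'rV[R]_s0) : R :=
  (pi *m (\sum_(l : 'I_3) (A (inord 2) l - A (inord 0) l)) *m (const_mx 1 : 'cV[R]_s0)) 0 0.
Definition drift2 (pi : 'rV[R]_s0) : R :=
  (pi *m (\sum_(k : 'I_3) (A k (inord 2) - A k (inord 0))) *m (const_mx 1 : 'cV[R]_s0)) 0 0.

End QBD.

(* Main.v *)
Require Import Defs.
From HB Require Import structures.
From mathcomp Require Import all_boot all_order all_algebra.
From mathcomp Require Import all_classical all_reals all_analysis.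
From mathcomp Require Import complex ring lra.
Import Order.TTheory GRing.Theory Num.Theory.
Import numFieldNormedType.Exports.
Local Open Scope ring_scope.
Local Open Scope classical_set_scope.

Lemma nbhs_box (R : realType) (S : set (prod R R)) (a b e : R) : 0 < e ->
  (forall p : prod R R, `|a - p.1| < e -> `|b - p.2| < e -> S p) -> nbhs (a, b) S.
Proof.
move=> e0 H; apply/nbhs_ballP; exists e => //= -[u v] [/= h1 h2].
apply: H; rewrite /=.
  by move: h1; rewrite /ball /=.
by move: h2; rewrite /ball /=.
Qed.

Lemma normc_ge0 (R : rcfType) (z : R[i]) : 0 <= Normc.normc z.
Proof. by case: z => a b; exact: sqrtr_ge0. Qed.

Lemma rec_bound (R : realType) (n : nat) (M : 'M[R[i]]_n.+1) (rho : R) : 0 <= rho ->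
  forall r : seq R[i], (forall z, z \in r -> rho * Normc.normc z < 1) ->
  forall B : 'M[R[i]]_n.+1, (\prod_(z <- r) (M - z%:M)) *m B = 0 ->
  forall i j, exists K, forall N,
    \sum_(0 <= m < N) rho ^+ m * Normc.normc ((M ^+ m *m B) i j) <= K.
Proof.
move=> rho0; elim/last_ind => [|r z IH] hr B hB i j.
  rewrite big_nil mul1mx in hB; exists 0 => N.
  rewrite big1 // => m _; by rewrite hB mulmx0 mxE Normc.normc0 mulr0.
rewrite big_rcons /= -mulmxA in hB.
have hr' : forall w, w \in r -> rho * Normc.normc w < 1.
  by move=> w wr; apply: hr; rewrite mem_rcons in_cons wr orbT.
have hz : rho * Normc.normc z < 1 by apply: hr; rewrite mem_rcons mem_head.
have [K hK] := IH hr' _ hB i j.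
set u := fun m => Normc.normc ((M ^+ m *m B) i j).
set q := rho * Normc.normc z.
have u0 : forall m, 0 <= u m by move=> m; exact: normc_ge0.
have step : forall m, u m.+1 <= Normc.normc z * u m +
     Normc.normc ((M ^+ m *m ((M - z%:M) *m B)) i j).
  move=> m.
  have E : (M ^+ m.+1 *m B) i j = z * (M ^+ m *m B) i j + (M ^+ m *m ((M - z%:M) *m B)) i j.
    have eM : M ^+ m *m M = M ^+ m.+1 by rewrite exprSr mulmxE.
    rewrite mulmxBl mulmxBr mulmxA eM mul_scalar_mx -scalemxAr.
    set P1 := M ^+ m.+1 *m B; set P0 := M ^+ m *m B.
    rewrite !mxE; ring.
  by rewrite /u E (le_trans (le_normcD _ _)) // Normc.normcM.
set S := fun N => \sum_(0 <= m < N) rho ^+ m * u m.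
have Sge : forall N, S N <= S N.+1.
  move=> N; rewrite /S big_nat_recr //= lerDl mulr_ge0 // exprn_ge0 //.
have Srec : forall N, S N.+1 <= u 0%N + q * S N + rho * K.
  move=> N; rewrite /S big_nat_recl //= expr0 mul1r -addrA lerD2l.
  have : \sum_(0 <= m < N) rho ^+ m.+1 * u m.+1 <=
     \sum_(0 <= m < N) (q * (rho ^+ m * u m) + rho * (rho ^+ m *
        Normc.normc ((M ^+ m *m ((M - z%:M) *m B)) i j))).
    apply: ler_sum => m _.
    apply: (@le_trans _ _ (rho * rho ^+ m * (Normc.normc z * u m +
        Normc.normc ((M ^+ m *m ((M - z%:M) *m B)) i j)))).
      by rewrite exprS; apply: ler_wpM2l; [rewrite mulr_ge0 ?exprn_ge0|exact: step].
    by rewrite /q le_eqVlt; apply/orP; left; apply/eqP; ring.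
  move/le_trans; apply; rewrite big_split /= -!mulr_sumr lerD2l ler_wpM2l //.
have q0 : 0 <= q by rewrite /q mulr_ge0 // normc_ge0.
have q1 : 0 < 1 - q by rewrite subr_gt0.
exists ((u 0%N + rho * K) / (1 - q)) => N.
apply: le_trans (Sge N) _.
rewrite ler_pdivlMr //.
have := Srec N; have := Sge N.
have : q * S N <= q * S N.+1 by apply: ler_wpM2l.
move=> h1 h2 h3.
have : S N.+1 <= u 0%N + q * S N.+1 + rho * K by apply: le_trans h3 _; rewrite lerD2r lerD2l.
move=> h4; rewrite mulrBr mulr1 lerBlDr.
by move: h4; rewrite [q * _]mulrC -addrA [_ * q + _]addrC addrA.
Qed.
Lemma map_mxX_C (R : realType) n (M : 'M[R]_n.+1) m :
  map_mx (fun r : R => (r%:C)%C) (M ^+ m) = (map_mx (fun r : R => (r%:C)%C) M) ^+ m.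
Proof.
elim: m => [|m IH]; first by rewrite !expr0 map_mx1.
by rewrite !exprS -!mulmxE map_mxM IH.
Qed.

Lemma mxpow_ge0 (R : realType) n (M : 'M[R]_n) : (forall i j, 0 <= M i j) ->
  forall m i j, 0 <= (M ^+ m) i j.
Proof.
move=> h; elim=> [|m IH] i j.
  by rewrite expr0 mxE; case: (i == j).
by rewrite exprS -mulmxE mxE; apply: sumr_ge0 => k _; apply: mulr_ge0.
Qed.
Lemma spec_bound (R : realType) n (M : 'M[R]_n.+1) : spr M < 1 ->
  (forall i j, 0 <= M i j) ->
  exists rho : R, 1 < rho /\ forall i j, exists K, forall N,
    \sum_(0 <= m < N) rho ^+ m * (M ^+ m) i j <= K.
Proof.
move=> hspr hM.
set Mc := map_mx (fun r : R => (r%:C)%C) M.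
have [rs hrs] := closed_field_poly_normal (char_poly Mc).
rewrite (monicP (char_poly_monic Mc)) scale1r in hrs.
have hroot : forall z, z \in rs -> Normc.normc z <= spr M.
  move=> z zr; apply: sup_upper_bound; last first.
    exists z => //; rewrite /cplx_eigenvalues /= -/Mc hrs root_prod_XsubC //.
  split; first by exists (Normc.normc z), z => //; rewrite /cplx_eigenvalues /= -/Mc hrs root_prod_XsubC.
  exists (\big[Order.max/0]_(w <- rs) Normc.normc w) => _ [w hw <-].
  apply: le_bigmax_seq => //.
  by move: hw; rewrite /cplx_eigenvalues /= -/Mc hrs root_prod_XsubC.
set s := Num.max (spr M) 0.
have s0 : 0 <= s by rewrite le_max lexx orbT.
have s1 : s < 1 by rewrite gt_max hspr ltr01.
exists (2 / (1 + s)); split.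
  by rewrite ltr_pdivlMr ?mul1r; lra.
have hz : forall z, z \in rs -> 2 / (1 + s) * Normc.normc z < 1.
  move=> z zr; have h1 : Normc.normc z <= s by rewrite le_max hroot.
  rewrite mulrC mulrA ltr_pdivrMr; last lra.
  have h0 := @normc_ge0 _ z. nra.
have CH := Cayley_Hamilton Mc.
rewrite hrs rmorph_prod in CH.
have CH' : \prod_(z <- rs) (Mc - z%:M) *m 1%:M = 0.
  rewrite mulmx1 -CH; apply: eq_bigr => z _.
  by rewrite rmorphB /= horner_mx_X horner_mx_C.
move=> i j.
have rho0 : 0 <= 2 / (1 + s) by apply: divr_ge0 => //; lra.
have [K hK] := @rec_bound _ _ Mc _ rho0 _ hz _ CH' i j.
exists K => N; apply: le_trans (hK N); rewrite le_eqVlt; apply/orP; left; apply/eqP.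
apply: eq_bigr => m _; congr (_ * _).
rewrite mulmx1 -map_mxX_C mxE /Normc.normc /= expr0n /= addr0 sqrtr_sqr ger0_norm //.
exact: mxpow_ge0.
Qed.
Definition wt {R : realType} {s0 : nat} (th : R * R) (y : state s0) : R :=
  expR (y.1.1%:~R * th.1 + y.1.2%:~R * th.2).

Lemma taboo_ge0 (R : realType) s0 (A : 'I_3 -> 'I_3 -> 'M[R]_s0) :
  (forall k l i j, 0 <= A k l i j) -> forall n y z, 0 <= taboo A n y z.
Proof.
move=> hA; elim=> [|n IH] y z /=; first by case: ifP.
case: ifP => // _; do 3 (apply: sumr_ge0 => ? _); exact: mulr_ge0.
Qed.

Lemma AstarE (R : realType) s0 (A : 'I_3 -> 'I_3 -> 'M[R]_s0) th i j :
  Astar A th i j = \sum_(a : 'I_3) \sum_(b : 'I_3)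
     expR ((Defs.shift a)%:~R * th.1 + (Defs.shift b)%:~R * th.2) * A a b i j.
Proof.
rewrite /Astar summxE; apply: eq_bigr => a _; rewrite summxE; apply: eq_bigr => b _.
by rewrite mxE.
Qed.

Lemma Astar_ge0 (R : realType) s0 (A : 'I_3 -> 'I_3 -> 'M[R]_s0) th :
  (forall k l i j, 0 <= A k l i j) -> forall i j, 0 <= Astar A th i j.
Proof.
move=> hA i j; rewrite AstarE; do 2 (apply: sumr_ge0 => ? _).
by apply: mulr_ge0; rewrite ?expR_ge0.
Qed.

Lemma count_le1 s0 (F : seq (nat * nat)) (y : state s0) j' : uniq F ->
  (count (fun k => y == natstate k j') F <= 1)%N.
Proof.
move=> uF.
have inj : injective (fun k : nat * nat => natstate k j').
  by move=> [a b] [c d] [/= -> ->].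
have -> : count (fun k => y == natstate k j') F = count_mem y (map (fun k => natstate k j') F).
  by rewrite count_map; apply: eq_count => k /=; rewrite eq_sym.
by rewrite count_uniq_mem ?(map_inj_uniq inj) //; case: (_ \in _).
Qed.

Lemma taboo_bound (R : realType) s0 (A : 'I_3 -> 'I_3 -> 'M[R]_s0)
  (th th' : R * R) (rho : R) : 0 <= rho ->
  (forall k l i j, 0 <= A k l i j) ->
  (forall k l : 'I_3, expR ((Defs.shift k)%:~R * th'.1 + (Defs.shift l)%:~R * th'.2)
       <= rho * expR ((Defs.shift k)%:~R * th.1 + (Defs.shift l)%:~R * th.2)) ->
  forall n y j' (F : seq (nat * nat)), uniq F ->
  \sum_(k <- F) wt th' (natstate k j') * taboo A n y (natstate k j')
    <= wt th' y * (rho ^+ n * (Astar A th ^+ n) y.2 j').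
Proof.
move=> rho0 hA hrho; elim=> [|n IH] y j' F uF.
  set c := wt th' y * _.
  have c0 : 0 <= c by rewrite /c expr0 mul1r mxE mulr_ge0 ?expR_ge0 //; case: (_ == _).
  apply: (@le_trans _ _ (\sum_(k <- F) (if y == natstate k j' then c else 0))).
    apply: ler_sum => k _ /=; rewrite /c; case: eqP => [->|_]; last by rewrite andbF mulr0.
    rewrite expr0 mul1r mxE eqxx /= ler_wpM2l ?expR_ge0 //; by case: ifP.
  rewrite -big_mkcond big_const_seq /=.
  have := @count_le1 _ F y j' uF; case: (count _ _) => [|[|//]] _ /=; by rewrite ?addr0.
have P0 : forall m i j, 0 <= (Astar A th ^+ m) i j by apply: mxpow_ge0; exact: Astar_ge0.
rewrite /=; case hy: (in_Splus y); last first.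
  rewrite big1 ?mulr0; last by move=> k _; rewrite mulr0.
  apply: mulr_ge0; [exact: expR_ge0| apply: mulr_ge0; [exact: exprn_ge0|exact: P0]].
set P := Astar A th ^+ n.
apply: (@le_trans _ _ (\sum_a \sum_b \sum_j A a b y.2 j * (wt th' (move y a b j) * (rho ^+ n * P j j')))).
  rewrite (eq_bigr (fun k => \sum_a \sum_b \sum_j wt th' (natstate k j') * (A a b y.2 j * taboo A n (move y a b j) (natstate k j')))); last first.
    move=> k _; rewrite mulr_sumr; apply: eq_bigr => a _; rewrite mulr_sumr; apply: eq_bigr => b _.
    by rewrite mulr_sumr.
  rewrite exchange_big; apply: ler_sum => a _; rewrite exchange_big; apply: ler_sum => b _.
  rewrite exchange_big; apply: ler_sum => j _.
  rewrite (eq_bigr (fun k => A a b y.2 j * (wt th' (natstate k j') * taboo A n (move y a b j) (natstate k j')))); last by move=> k _; rewrite mulrCA.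
  by rewrite -mulr_sumr ler_wpM2l //; apply: IH.
apply: (@le_trans _ _ (\sum_a \sum_b \sum_j A a b y.2 j * (wt th' y * (rho * expR ((Defs.shift a)%:~R * th.1 + (Defs.shift b)%:~R * th.2)) * (rho ^+ n * P j j')))).
  apply: ler_sum => a _; apply: ler_sum => b _; apply: ler_sum => j _.
  apply: ler_wpM2l => //; apply: ler_wpM2r; first by rewrite mulr_ge0 ?exprn_ge0 ?P0.
  have -> : wt th' (move y a b j) = wt th' y * expR ((Defs.shift a)%:~R * th'.1 + (Defs.shift b)%:~R * th'.2).
    by rewrite /wt /= !intrD -expRD; congr (expR _); ring.
  by apply: ler_wpM2l; rewrite ?expR_ge0 ?hrho.
rewrite le_eqVlt; apply/orP; left; apply/eqP.
rewrite [rho ^+ n.+1]exprS [Astar A th ^+ n.+1]exprS -mulmxE mxE -/P.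
have -> : \sum_j Astar A th y.2 j * P j j' = \sum_j \sum_a \sum_b
    expR ((Defs.shift a)%:~R * th.1 + (Defs.shift b)%:~R * th.2) * A a b y.2 j * P j j'.
  apply: eq_bigr => j _; rewrite AstarE mulr_suml; apply: eq_bigr => a _; by rewrite mulr_suml.
have sw : forall f : 'I_3 -> 'I_3 -> 'I_s0 -> R, \sum_j \sum_a \sum_b f a b j = \sum_a \sum_b \sum_j f a b j.
  by move=> f; rewrite exchange_big; apply: eq_bigr => a _; rewrite exchange_big.
rewrite (sw (fun a b j => expR ((Defs.shift a)%:~R * th.1 + (Defs.shift b)%:~R * th.2) * A a b y.2 j * P j j')).
rewrite mulrA mulr_sumr; apply: eq_bigr => a _; rewrite mulr_sumr; apply: eq_bigr => b _.
rewrite mulr_sumr; apply: eq_bigr => j _; ring.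
Qed.
Lemma Phi_fin (R : realType) s0 (A : 'I_3 -> 'I_3 -> 'M[R]_s0)
  (th th' th'' : R * R) (rho : R) : 0 <= rho ->
  (forall k l i j, 0 <= A k l i j) ->
  (forall k l : 'I_3, expR ((Defs.shift k)%:~R * th'.1 + (Defs.shift l)%:~R * th'.2)
       <= rho * expR ((Defs.shift k)%:~R * th.1 + (Defs.shift l)%:~R * th.2)) ->
  th''.1 <= th'.1 -> th''.2 <= th'.2 ->
  forall x j j' K, (forall N, \sum_(0 <= m < N) rho ^+ m * (Astar A th ^+ m) j j' <= K) ->
  (Phi A x th'' j j' < +oo)%E.
Proof.
move=> rho0 hA hrho h1 h2 x j j' K hK.
have P0 : forall m i j, 0 <= (Astar A th ^+ m) i j by apply: mxpow_ge0; exact: Astar_ge0.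
apply: (@le_lt_trans _ _ ((wt th' (natstate x j) * K)%:E)); last exact: ltry.
rewrite /Phi /esum; apply: ge_ereal_sup => _ [X [finX _] <-].
rewrite fsbig_finite //=.
set F := finmap.enum_fset _.
have uF : uniq F by exact: finmap.fset_uniq.
rewrite /qtilde.
have E : forall k : nat * nat, ((expR (k.1%:R * th''.1 + k.2%:R * th''.2))%:E *
    \sum_(0 <= n <oo) (taboo A n (natstate x j) (natstate k j'))%:E =
    \sum_(0 <= n <oo) ((expR (k.1%:R * th''.1 + k.2%:R * th''.2) * taboo A n (natstate x j) (natstate k j'))%:E))%E.
  move=> k; rewrite -nneseriesZl; last by move=> i _; rewrite lee_fin taboo_ge0.
  by apply: congr_lim; apply/funext => N; apply: eq_bigr => i _; rewrite EFinM.
rewrite (eq_bigr _ (fun k _ => E k)) -nneseries_sum; last first.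
  by move=> k n _; rewrite lee_fin mulr_ge0 ?expR_ge0 ?taboo_ge0.
set c := wt th' (natstate x j).
have L := (@lee_nneseries R _ (fun n => (c * (rho ^+ n * (Astar A th ^+ n) j j'))%:E) xpredT 0%N).
eapply le_trans; first apply: L.
    by move=> n _ _; rewrite sumEFin lee_fin; apply: sumr_ge0 => k _; rewrite mulr_ge0 ?expR_ge0 ?taboo_ge0.
  move=> n _; rewrite sumEFin lee_fin.
  apply: le_trans (@taboo_bound _ _ A th th' rho rho0 hA hrho n (natstate x j) j' F uF).
  apply: ler_sum => k _; apply: ler_wpM2r; first by rewrite taboo_ge0.
  rewrite /wt /= ler_expR; apply: lerD; apply: ler_wpM2l => //; exact: ler0n.
apply: lime_le; first by apply: is_cvg_nneseries => n _ _; rewrite lee_fin mulr_ge0 ?expR_ge0 // mulr_ge0 ?exprn_ge0 ?P0.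
apply: nearW => N; rewrite sumEFin lee_fin -mulr_sumr ler_wpM2l ?expR_ge0 //.
Qed.
Lemma shift_cases (R : realType) (k : 'I_3) :
  ((Defs.shift k)%:~R = -1 :> R) \/ ((Defs.shift k)%:~R = 0 :> R) \/ ((Defs.shift k)%:~R = 1 :> R).
Proof.
have -> : (Defs.shift k)%:~R = (k%:R - 1 : R) by rewrite /Defs.shift intrB.
case: k => [[|[|[|//]]]] _ /=.
- by left; rewrite sub0r.
- by right; left; rewrite subrr.
- by right; right; rewrite [2%:R]/(1 + 1) addrK.
Qed.

Lemma gamma_near (R : realType) n (A : 'I_3 -> 'I_3 -> 'M[R]_n.+1) :
  (forall k l i j, 0 <= A k l i j) -> forall th, Gamma A th ->
  exists2 e : R, 0 < e & forall th' th'' : R * R, `|th.1 - th'.1| < e -> `|th.2 - th'.2| < e ->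
    th''.1 <= th'.1 -> th''.2 <= th'.2 -> forall x j j', (Phi A x th'' j j' < +oo)%E.
Proof.
move=> hA th hth.
have [rho [rho1 hK]] := @spec_bound _ _ (Astar A th) hth (@Astar_ge0 _ _ A th hA).
have rho0 : 0 < rho by apply: lt_trans rho1.
have lnr : 0 < ln rho by rewrite ln_gt0.
exists (ln rho / 2); first by rewrite divr_gt0.
move=> th' th'' d1 d2 l1 l2 x j j'.
have [K hKj] := hK j j'.
apply: (@Phi_fin _ _ A th th' th'' rho (ltW rho0) hA) l1 l2 x j j' K hKj.
move=> k l.
have er : rho = expR (ln rho) by rewrite lnK // posrE.
rewrite [in X in _ <= X]er -expRD ler_expR.
move: d1 d2; rewrite !ltr_distlC => /andP[a1 a2] /andP[b1 b2].
by case: (shift_cases R k) => [->|[->|->]]; case: (shift_cases R l) => [->|[->|->]]; lra.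
Qed.
Theorem lemma4p3 (R : realType) (s0 : nat) (A : 'I_3 -> 'I_3 -> 'M[R]_s0)
  (pi : 'rV[R]_s0)
  (hs0 : (0 < s0)%N)
  (hA_nonneg : forall k l i j, 0 <= A k l i j)
  (hA_stoch : forall i, \sum_j Asum A i j = 1)
  (hirr : irreducible_chain A)
  (haper : aperiodic_chain A)
  (hpi : is_stationary pi (Asum A))
  (hdrift : drift1 A pi < 0 \/ drift2 A pi < 0)
  (hirrP : irreducible_Pplus A) :
  forall x : nat * nat, Gamma A `<=` Dx A x /\ Dset A `<=` Dx A x.
Proof.
move: A pi hs0 hA_nonneg hA_stoch hirr haper hpi hdrift hirrP.
case: s0 => [//|n] A _ _ hA _ _ _ _ _ _ x; split.
  move=> [a b] hth; have [e e0 he] := @gamma_near _ _ A hA _ hth.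
  rewrite /Dx /interior; apply: (@nbhs_box R _ a b e e0) => p h1 h2 j j'.
  exact: (he p p h1 h2 (lexx _) (lexx _) x j j').
move=> [a b] [th0 hth0 [/= l1 l2]].
have [e e0 he] := @gamma_near _ _ A hA _ hth0.
rewrite /Dx /interior.
have d0 : 0 < Num.min (th0.1 - a) (th0.2 - b) by rewrite lt_min !subr_gt0 l1 l2.
apply: (@nbhs_box R _ a b _ d0) => p h1 h2 j j'.
have m1 : Num.min (th0.1 - a) (th0.2 - b) <= th0.1 - a by rewrite ge_min lexx.
have m2 : Num.min (th0.1 - a) (th0.2 - b) <= th0.2 - b by rewrite ge_min lexx orbT.
apply: (he th0 p); rewrite ?subrr ?normr0 //.
  by move: h1; rewrite ltr_distlC => /andP[_ h] /=; lra.
by move: h2; rewrite ltr_distlC => /andP[_ h] /=; lra.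
Qed.
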